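(* Let $((A_i,B_i))_{i\in\mathbb N}$ be a strictly increasing sequence of tight separations of a connected locally finite graph $G$, with limit $(A,B)=(\bigcup_iA_i,\bigcap_iB_i)$. If the sequence is non-exhaustive (i.e. $B\neq\emptyset$), then $A\cap B$ is infinite.
   Context: A separation of $G$ is an unordered pair $\{A,B\}$ of subsets of $V(G)$ with $A\cup B=V(G)$ and no edge between $A\setminus B$ and $B\setminus A$; oriented separations $(A,B)$ are ordered by $(A,B)\le(C,D)$ iff $A\subseteq C$ and $B\supseteq D$. For $X\subseteq V(G)$, a component $K$ of $G-X$ is tight if $N_G(K)=X$. A separation $\{A,B\}$ is tight if both $A\setminus B$ and $B\setminus A$ contain the vertex set of a tight component of $G-(A\cap B)$. A strictly increasing sequence is exhaustive if its limit $(A,B)$ has $B=\emptyset$. *)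

(* Defs.v *)
From Stdlib Require Import List.

Section Graphs.
Variable V : Type.
Variable adj : V -> V -> Prop.

Definition simple_graph : Prop :=
  (forall u v, adj u v -> adj v u) /\ (forall v, ~ adj v v).

Definition finite_set (S : V -> Prop) : Prop :=
  exists l : list V, forall x, S x -> In x l.

Definition locally_finite : Prop := forall v, finite_set (adj v).

Inductive reach (S : V -> Prop) : V -> V -> Prop :=
| reach_refl x : S x -> reach S x x
| reach_step x y z : reach S x y -> adj y z -> S z -> reach S x z.

Definition connected_graph : Prop := forall x y, reach (fun _ => True) x y.

(* K is (the vertex set of) a component of G - X *)
Definition component (X K : V -> Prop) : Prop :=
  exists x, ~ X x /\ forall y, K y <-> reach (fun v => ~ X v) x y.

Definition nbhd (K : V -> Prop) (v : V) : Prop :=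
  ~ K v /\ exists u, K u /\ adj u v.

Definition tight_component (X K : V -> Prop) : Prop :=
  component X K /\ forall v, nbhd K v <-> X v.

Definition separation (A B : V -> Prop) : Prop :=
  (forall v, A v \/ B v) /\
  (forall u v, A u -> ~ B u -> B v -> ~ A v -> ~ adj u v).

Definition tight_separation (A B : V -> Prop) : Prop :=
  separation A B /\
  (let X := fun v => A v /\ B v in
   (exists K, tight_component X K /\ forall v, K v -> A v /\ ~ B v) /\
   (exists K, tight_component X K /\ forall v, K v -> B v /\ ~ A v)).

Definition sep_le (A B C D : V -> Prop) : Prop :=
  (forall v, A v -> C v) /\ (forall v, D v -> B v).

Definition set_eq (S T : V -> Prop) : Prop := forall v, S v <-> T v.

Definition sep_lt (A B C D : V -> Prop) : Prop :=
  sep_le A B C D /\ ~ (set_eq A C /\ set_eq B D).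

End Graphs.
Arguments simple_graph {V}.
Arguments connected_graph {V}.
Arguments locally_finite {V}.
Arguments tight_separation {V}.
Arguments sep_lt {V}.
Arguments finite_set {V}.

(* Main.v *)
Require Import Defs.
From Stdlib Require Import List Classical Lia Arith.

Lemma reach_iff (V : Type) (adj : V -> V -> Prop) (S P : V -> Prop) x y :
  reach V adj S x y ->
  (forall a b, S a -> S b -> adj a b -> (P a <-> P b)) -> (P x <-> P y).
Proof.
  intros H Hst. induction H as [x Hx|x y z Hxy IH Hyz Hz].
  - tauto.
  - assert (S y) by (destruct Hxy; auto).
    specialize (Hst y z H Hz Hyz). tauto.
Qed.

Lemma stab (V : Type) (As : nat -> V -> Prop)
  (mono : forall i j v, i <= j -> As i v -> As j v) (l : list V) :
  exists N, forall v, In v l -> (exists j, As j v) -> As N v.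
Proof.
  induction l as [|a l [N HN]].
  - exists 0. intros v [].
  - destruct (classic (exists j, As j a)) as [[j Hj]|Hn].
    + exists (max N j). intros v [<-|Hv] Hex.
      * apply (mono j); auto; lia.
      * apply (mono N); auto; lia.
    + exists N. intros v [<-|Hv] Hex; [contradiction|auto].
Qed.

Lemma fin_nb (V : Type) (adj : V -> V -> Prop) (l : list V) :
  (forall x, finite_set (adj x)) ->
  exists l', forall n, (exists x, In x l /\ adj x n) -> In n l'.
Proof.
  intros Hf. induction l as [|a l [l' Hl']].
  - exists nil. intros n [x [[] _]].
  - destruct (Hf a) as [la Hla]. exists (la ++ l'). intros n [x [[<-|Hx] Hxn]].
    + apply in_or_app; left; auto.
    + apply in_or_app; right; eauto.
Qed.

Theorem mainTheorem5 (V : Type) (adj : V -> V -> Prop)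
  (As Bs : nat -> V -> Prop) :
  simple_graph adj ->
  connected_graph adj ->
  locally_finite adj ->
  (forall i, tight_separation adj (As i) (Bs i)) ->
  (forall i, sep_lt (As i) (Bs i) (As (S i)) (Bs (S i))) ->
  let A := fun v => exists i, As i v in
  let B := fun v => forall i, Bs i v in
  (exists v, B v) ->
  ~ finite_set (fun v => A v /\ B v).
Proof.
  intros Hsimp Hconn Hlf Htight Hlt A B [b Hb] Hfin.
  destruct Hsimp as [Hsym Hirr].
  assert (HmA : forall i j v, i <= j -> As i v -> As j v).
  { intros i j v Hij Hv. induction Hij; auto. apply (proj1 (proj1 (Hlt m))); auto. }
  assert (HmB : forall i j v, i <= j -> Bs j v -> Bs i v).
  { intros i j v Hij. induction Hij; auto. intro H. apply IHHij.
    apply (proj2 (proj1 (Hlt m))); auto. }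
  assert (Hcovi : forall i v, As i v \/ Bs i v).
  { intros i v. destruct (Htight i) as [[Hc _] _]. apply Hc. }
  assert (Hsepi : forall i u v, As i u -> ~ Bs i u -> Bs i v -> ~ As i v -> ~ adj u v).
  { intros i. destruct (Htight i) as [[_ Hs] _]. apply Hs. }
  assert (Hcov : forall v, A v \/ B v).
  { intros v. destruct (classic (B v)) as [H|H]; [right; auto|left].
    apply not_all_ex_not in H. destruct H as [i Hi].
    exists i. destruct (Hcovi i v); tauto. }
  assert (Hsep : forall u v, A u -> ~ B u -> B v -> ~ A v -> adj u v -> False).
  { intros u v [i Hi] Hu Hv Hv' Huv.
    apply not_all_ex_not in Hu. destruct Hu as [j Hj].
    apply (Hsepi (max i j) u v).
    - apply (HmA i); auto; lia.
    - intro H. apply Hj. apply (HmB j (max i j)); auto; lia.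
    - apply Hv.
    - intro H. apply Hv'. exists (max i j); auto.
    - auto. }
  assert (Hne : exists x, A x /\ B x).
  { destruct (Htight 0) as [_ [[K [[[r [Hr HK]] _] HKA]] _]].
    assert (Kr : K r) by (apply HK; constructor; auto).
    destruct (HKA r Kr) as [Ar Br].
    assert (Hinv : forall c w, reach V adj (fun _ => True) c w -> As 0 c -> ~ Bs 0 c ->
              (A w /\ ~ B w) \/ exists x, A x /\ B x).
    { clear HK HKA Kr Hr. intros c w Hw. induction Hw as [x _|x y z Hxy IH Hyz _]; intros Ac Bc.
      - left. split; [exists 0; auto|intro H; apply Bc; apply H].
      - destruct (IH Ac Bc) as [[Ay By]|H]; [|right; auto].
        destruct (classic (A z /\ B z)) as [Hz|Hz]; [right; eauto|].
        destruct (Hcov z) as [Az|Bz].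
        + left. split; auto.
        + exfalso. apply (Hsep y z); auto. }
    destruct (Hinv r b (Hconn r b) Ar Br) as [[_ H]|H]; [contradiction|auto]. }
  destruct Hne as [x0 Hx0].
  destruct Hfin as [lX HlX].
  destruct (fin_nb V adj lX Hlf) as [lN HlN].
  destruct (stab V As HmA (lX ++ lN)) as [N HN].
  assert (HS : forall v, (A v /\ B v) \/ (exists x, (A x /\ B x) /\ adj x v) ->
             A v -> forall i, N <= i -> As i v).
  { intros v Hv Av i Hi. apply (HmA N); auto. apply HN; auto.
    apply in_or_app. destruct Hv as [Hv|[x [Hx Hxv]]]; [left; auto|right].
    apply HlN. exists x; auto. }
  assert (HXi : forall i, N <= i -> forall v, A v /\ B v -> As i v /\ Bs i v).
  { intros i Hi v Hv. split; [|apply (proj2 Hv)].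
    apply HS; auto. tauto. }
  assert (HXsub : forall i, N <= i -> forall v, As i v -> Bs i v -> A v /\ B v).
  { intros i Hi v Av Bv.
    destruct (Htight i) as [_ [_ [D [[[r [Hr HD]] Htc] HDB]]]].
    destruct (proj2 (Htc v) (conj Av Bv)) as [Hvn [u [Du Huv]]].
    destruct (proj2 (Htc x0) (HXi i Hi x0 Hx0)) as [_ [y [Dy Hyx]]].
    set (P := fun w => B w /\ ~ A w).
    assert (Py : P y).
    { destruct (HDB y Dy) as [_ Hy].
      assert (~ A y).
      { intro Ay. apply Hy. apply HS; auto. right. exists x0. split; auto. }
      split; auto. destruct (Hcov y); tauto. }
    set (Sx := fun w => ~ (As i w /\ Bs i w)).
    assert (Hdir : forall a c, Sx a -> Sx c -> adj a c -> P a -> P c).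
    { intros a c Sa Sc Hac [Ba Na].
      assert (~ A c).
      { intro Ac. destruct (classic (B c)) as [Bc|Bc].
        - apply Sc. apply HXi; auto.
        - apply (Hsep c a); auto. }
      split; auto. destruct (Hcov c); tauto. }
    assert (Hst : forall a c, Sx a -> Sx c -> adj a c -> (P a <-> P c)).
    { intros a c Sa Sc Hac. split; intro; eauto. }
    assert (Pr : P r).
    { apply (proj2 (reach_iff V adj Sx P r y (proj1 (HD y) Dy) Hst)); auto. }
    assert (Pu : P u).
    { apply (proj1 (reach_iff V adj Sx P r u (proj1 (HD u) Du) Hst)); auto. }
    destruct Pu as [Bu Nu].
    assert (A v) by (exists i; auto).
    split; auto.
    apply NNPP; intro Bv'. apply (Hsep v u); auto. }
  assert (HA : forall v, As (S N) v -> As N v).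
  { intros v Hv. apply NNPP; intro Hn.
    assert (Hinv : forall c w, reach V adj (fun _ => True) c w ->
       As (S N) c -> ~ As N c ->
       (As (S N) w /\ ~ As N w) \/
       exists n, As (S N) n /\ ~ As N n /\ exists x, (A x /\ B x) /\ adj x n).
    { clear Hv Hn. intros c w Hw. induction Hw as [x _|x y z Hxy IH Hyz _]; intros Hv Hn.
      - left; auto.
      - destruct (IH Hv Hn) as [[Ay Ny]|H]; [|right; auto].
        destruct (classic (A z /\ B z)) as [Xz|Xz].
        + right. exists y. repeat split; auto. exists z; auto.
        + left. split.
          * apply NNPP; intro Az.
            assert (Bz : Bs (S N) z) by (destruct (Hcovi (S N) z); tauto).
            assert (~ Bs (S N) y).
            { intro By. apply Ny. apply HXi; auto. apply (HXsub (S N)); auto. }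
            apply (Hsepi (S N) y z); auto.
          * intro Az.
            assert (~ Bs N z).
            { intro Bz. apply Xz. apply (HXsub N); auto. }
            assert (By : Bs N y) by (destruct (Hcovi N y); tauto).
            apply (Hsepi N z y); auto. }
    destruct (Hinv v x0 (Hconn v x0) Hv Hn) as [[_ H]|[n [Hn1 [Hn2 [x [Hx Hxn]]]]]].
    - apply H. apply HXi; auto.
    - apply Hn2. apply HS; auto. right; eauto. exists (S N); auto. }
  assert (HB : forall v, Bs N v -> Bs (S N) v).
  { intros v Hv. destruct (classic (As N v)) as [Av|Av].
    - apply (HXsub N); auto.
    - destruct (Hcovi (S N) v) as [H|H]; auto. exfalso; apply Av; auto. }
  apply (proj2 (Hlt N)). split; intro v; split; intro H.
  - apply (proj1 (proj1 (Hlt N))); auto.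
  - auto.
  - auto.
  - apply (proj2 (proj1 (Hlt N))); auto.
Qed.
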